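(* Let $\Gamma$ be a gain operator on $\ell^\infty_+(\mathcal I)$ and suppose there is a path $\sigma:\mathbb R_+\to\ell^\infty_+(\mathcal I)$ that is continuous (in norm) and satisfies: (i) there is $\tilde\rho\in\mathcal K_\infty$ with $\Gamma_{\tilde\rho}(\sigma(r))\le\sigma(r)$ for all $r\ge0$; (ii) there are $\varphi_{\min},\varphi_{\max}\in\mathcal K_\infty$ with $\varphi_{\min}(r)\mathbf 1\le\sigma(r)\le\varphi_{\max}(r)\mathbf 1$ for all $r\ge0$ ($\sigma$ need not be increasing; in particular this holds if $\Gamma$ admits a $C^0$-path of strict decay). Then there is $\rho\in\mathcal K_\infty$ such that (a) $\Sigma(\Gamma_\rho)$ is UGAS, and (b) $\Gamma_\rho$ satisfies the $\oplus$-MBI property.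
   Context: Let $\mathcal I$ be a nonempty countable index set; $\ell^\infty_+(\mathcal I)$ is the cone of nonnegative real families $s=(s_i)_{i\in\mathcal I}$ with $\|s\|:=\sup_i|s_i|<\infty$, ordered componentwise; $\mathbf 1$ is the all-ones vector; $\oplus$ is the componentwise maximum. $\mathcal K$: continuous strictly increasing $\gamma:\mathbb R_+\to\mathbb R_+$ with $\gamma(0)=0$; $\mathcal K_\infty$: unbounded elements of $\mathcal K$, acting on $\ell^\infty_+(\mathcal I)$ componentwise; $\mathcal{KL}$: continuous $\beta:\mathbb R_+^2\to\mathbb R_+$ with $\beta(\cdot,t)\in\mathcal K$ and $\beta(r,\cdot)$ continuous strictly decreasing to $0$ for $r>0$. For $\mathcal J\subset\mathcal I$, $s_{|\mathcal J}$ agrees with $s$ on $\mathcal J$ and is $0$ elsewhere. Gain operator: for each $i$ a finite (possibly empty) $\mathcal I_i\subset\mathcal I\setminus\{i\}$; directed graph $\mathcal G$ with vertices $\mathcal I$ and edges $ji$, $j\in\mathcal I_i$; a pointwise equicontinuous family $\gamma_{ij}\in\mathcal K_\infty$ ($ji\in E(\mathcal G)$); functions $\mu_i:\ell^\infty_+(\mathcal I)\to[0,\infty]$ with (M1) some $\xi\in\mathcal K_\infty$ has $\mu_i(0)=0$, $\mu_i(s)\ge\xi(\|s\|)$; (M2) $\mu_i$ monotone; (M3) for each finite $\mathcal J$, $\mu_i$ restricted to vectors vanishing off $\mathcal J$ is finite-valued and continuous; (M4) for each norm-bounded $A$ and $\varepsilon>0$ there is $\delta>0$ with $\sup_i|\mu_i(s_{|\mathcal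 I_i})-\mu_i(s^0_{|\mathcal I_i})|\le\varepsilon$ whenever $s^0\in A$, $\|s-s^0\|\le\delta$. $\Gamma_i(s):=\mu_i([\gamma_{ij}(s_j)]_{j\in\mathcal I_i})$ (argument zero outside $\mathcal I_i$). $\Gamma_\rho:=(\mathrm{id}+\rho)\circ\Gamma$. A $C^0$-path of strict decay is a path $\sigma$ satisfying (i), (ii) above, being increasing ($r_1\le r_2\Rightarrow\sigma(r_1)\le\sigma(r_2)$) and norm-continuous. $\Sigma(T)$ is the system $s^{n+1}=T(s^n)$; it is UGAS if $\|T^n(s)\|\le\beta(\|s\|,n)$ for some $\beta\in\mathcal{KL}$ and all $s,n$. A monotone $T$ has the $\oplus$-MBI property if there is $\varphi\in\mathcal K_\infty$ such that for all $s,b$, $s\le b\oplus T(s)$ implies $\|s\|\le\varphi(\|b\|)$. *)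

(* Defs.v *)
From Stdlib Require Import Reals Lra List ClassicalDescription.
From Coquelicot Require Import Coquelicot.
Open Scope R_scope.

Definition nrm {I : Type} (s : I -> R) : R :=
  real (Lub_Rbar (fun x => exists i, x = Rabs (s i))).

Definition linf_plus {I : Type} (s : I -> R) : Prop :=
  (forall i, 0 <= s i) /\ exists M, forall i, s i <= M.

Definition vsub {I : Type} (s t : I -> R) : I -> R := fun i => s i - t i.

Definition restr {I : Type} (J : list I) (s : I -> R) : I -> R :=
  fun j => if excluded_middle_informative (In j J) then s j else 0.

Definition vanishes_off {I : Type} (J : list I) (s : I -> R) : Prop :=
  forall j, ~ In j J -> s j = 0.

Definition cont_Rplus (g : R -> R) : Prop :=
  forall x, 0 <= x -> forall eps, 0 < eps -> exists delta, 0 < delta /\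
    forall y, 0 <= y -> Rabs (y - x) < delta -> Rabs (g y - g x) < eps.

Definition class_K (g : R -> R) : Prop :=
  cont_Rplus g /\ g 0 = 0 /\
  (forall x y, 0 <= x -> x < y -> g x < g y) /\
  (forall x, 0 <= x -> 0 <= g x).

Definition class_Kinf (g : R -> R) : Prop :=
  class_K g /\ (forall M, exists x, 0 <= x /\ M < g x).

Definition class_KL (b : R -> R -> R) : Prop :=
  (forall r t, 0 <= r -> 0 <= t -> forall eps, 0 < eps -> exists delta, 0 < delta /\
     forall r' t', 0 <= r' -> 0 <= t' -> Rabs (r' - r) < delta -> Rabs (t' - t) < delta ->
       Rabs (b r' t' - b r t) < eps) /\
  (forall r t, 0 <= r -> 0 <= t -> 0 <= b r t) /\
  (forall t, 0 <= t -> class_K (fun r => b r t)) /\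
  (forall r, 0 < r ->
     cont_Rplus (b r) /\
     (forall t t', 0 <= t -> t < t' -> b r t' < b r t) /\
     (forall eps, 0 < eps -> exists T, forall t, T <= t -> b r t < eps)).

(** Gain operator data.
    Ii i : the finite set I_i (a list), i notin I_i;
    gam i j : gamma_{ij} (for j in I_i, i.e. edge ji);
    mu i : mu_i : l^oo_+(I) -> [0, +oo] (Rbar valued). *)
Definition is_gain_operator {I : Type} (Ii : I -> list I) (gam : I -> I -> R -> R)
    (mu : I -> (I -> R) -> Rbar) : Prop :=
  (forall i, ~ In i (Ii i)) /\
  (forall i j, In j (Ii i) -> class_Kinf (gam i j)) /\
  (forall r, 0 <= r -> forall eps, 0 < eps -> exists delta, 0 < delta /\
     forall i j, In j (Ii i) -> forall r', 0 <= r' -> Rabs (r' - r) < delta ->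
       Rabs (gam i j r' - gam i j r) < eps) /\
  (forall i s, linf_plus s -> Rbar_le (Finite 0) (mu i s)) /\
  (exists xi, class_Kinf xi /\ forall i,
     mu i (fun _ => 0) = Finite 0 /\
     forall s, linf_plus s -> Rbar_le (Finite (xi (nrm s))) (mu i s)) /\
  (forall i s t, linf_plus s -> linf_plus t -> (forall j, s j <= t j) ->
     Rbar_le (mu i s) (mu i t)) /\
  (forall i (J : list I),
     (forall s, linf_plus s -> vanishes_off J s -> is_finite (mu i s)) /\
     (forall s, linf_plus s -> vanishes_off J s ->
        forall eps, 0 < eps -> exists delta, 0 < delta /\
        forall t, linf_plus t -> vanishes_off J t -> nrm (vsub t s) < delta ->
          Rabs (real (mu i t) - real (mu i s)) < eps)) /\
  (forall (A : (I -> R) -> Prop),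
     (forall s, A s -> linf_plus s) -> (exists M, forall s, A s -> nrm s <= M) ->
     forall eps, 0 < eps -> exists delta, 0 < delta /\
       forall s0 s, A s0 -> linf_plus s -> nrm (vsub s s0) <= delta ->
         forall i, Rabs (real (mu i (restr (Ii i) s)) - real (mu i (restr (Ii i) s0))) <= eps).

(** Gamma_i(s) = mu_i([gamma_ij(s_j)]_{j in I_i}) (zero outside I_i); finite by (M3). *)
Definition Gam {I : Type} (Ii : I -> list I) (gam : I -> I -> R -> R)
    (mu : I -> (I -> R) -> Rbar) (s : I -> R) : I -> R :=
  fun i => real (mu i (fun j => if excluded_middle_informative (In j (Ii i))
                                 then gam i j (s j) else 0)).

Definition Gam_rho {I : Type} (Ii : I -> list I) (gam : I -> I -> R -> R)
    (mu : I -> (I -> R) -> Rbar) (rho : R -> R) (s : I -> R) : I -> R :=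
  fun i => Gam Ii gam mu s i + rho (Gam Ii gam mu s i).

Definition UGAS {I : Type} (T : (I -> R) -> (I -> R)) : Prop :=
  exists beta, class_KL beta /\
    forall s, linf_plus s -> forall n : nat, nrm (Nat.iter n T s) <= beta (nrm s) (INR n).

Definition oplus_MBI {I : Type} (T : (I -> R) -> (I -> R)) : Prop :=
  exists phi, class_Kinf phi /\
    forall s b, linf_plus s -> linf_plus b ->
      (forall i, s i <= Rmax (b i) (T s i)) -> nrm s <= phi (nrm b).

(* Main.v *)
Require Import Defs.
From Stdlib Require Import Reals Lra Lia ZArith List Classical ClassicalDescription.
From Stdlib Require ClassicalEpsilon.
From Coquelicot Require Import Coquelicot.
Open Scope R_scope.

Lemma nrm_le {I : Type} (s : I -> R) (M : R) :
  0 <= M -> (forall i, Rabs (s i) <= M) -> nrm s <= M.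
Proof.
  intros HM H. unfold nrm.
  destruct (Lub_Rbar_correct (fun x => exists i, x = Rabs (s i))) as [Hub Hl].
  assert (Hle : Rbar_le (Lub_Rbar (fun x => exists i, x = Rabs (s i))) (Finite M)).
  { apply Hl. intros x [i ->]. simpl. apply H. }
  destruct (Lub_Rbar _); simpl in *; try lra; contradiction.
Qed.

Lemma nrm_ge {I : Type} (s : I -> R) (i : I) :
  (exists M, forall j, Rabs (s j) <= M) -> Rabs (s i) <= nrm s.
Proof.
  intros [M HM]. unfold nrm.
  destruct (Lub_Rbar_correct (fun x => exists i, x = Rabs (s i))) as [Hub Hl].
  assert (Hle : Rbar_le (Lub_Rbar (fun x => exists i, x = Rabs (s i))) (Finite M)).
  { apply Hl. intros x [j ->]. simpl. apply HM. }
  assert (H2 := Hub (Rabs (s i)) (ex_intro _ i eq_refl)).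
  destruct (Lub_Rbar _); simpl in *; try lra; contradiction.
Qed.

Lemma nrm_nonneg {I : Type} (s : I -> R) : 0 <= nrm s.
Proof.
  unfold nrm.
  destruct (Lub_Rbar_correct (fun x => exists i, x = Rabs (s i))) as [Hub Hl].
  destruct (Lub_Rbar _) eqn:E; simpl; try lra.
  destruct (classic (exists i : I, True)) as [[i _]|Hn].
  - assert (H2 := Hub (Rabs (s i)) (ex_intro _ i eq_refl)). simpl in H2.
    pose proof (Rabs_pos (s i)). lra.
  - assert (H3 : Rbar_le (Finite r) m_infty).
    { apply Hl. intros x [i _]. exfalso; apply Hn; exists i; auto. }
    simpl in H3. contradiction.
Qed.

Definition vle {I : Type} (s t : I -> R) : Prop := forall i, s i <= t i.
Definition vnn {I : Type} (s : I -> R) : Prop := forall i, 0 <= s i.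

Lemma nrm_le_nonneg {I : Type} (s : I -> R) (M : R) :
  0 <= M -> vnn s -> (forall i, s i <= M) -> nrm s <= M.
Proof.
  intros HM Hs H. apply nrm_le; auto. intros i. rewrite Rabs_pos_eq; auto.
Qed.

Lemma nrm_ge_nonneg {I : Type} (s : I -> R) (i : I) :
  vnn s -> (exists M, forall j, s j <= M) -> s i <= nrm s.
Proof.
  intros Hs [M HM]. pose proof (nrm_ge s i). rewrite Rabs_pos_eq in H; auto.
  apply H. exists M. intros j. rewrite Rabs_pos_eq; auto.
Qed.

Lemma Kinf_mono (g : R -> R) : class_Kinf g -> forall x y, 0 <= x -> x <= y -> g x <= g y.
Proof.
  intros [[_ [_ [Hs _]]] _] x y Hx Hxy. destruct (Req_dec x y) as [->|Hne]; [lra|].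
  left; apply Hs; lra.
Qed.

Lemma Kinf_nonneg (g : R -> R) : class_Kinf g -> forall x, 0 <= x -> 0 <= g x.
Proof. intros [[_ [_ [_ H]]] _]; auto. Qed.

Lemma Kinf_zero (g : R -> R) : class_Kinf g -> g 0 = 0.
Proof. intros [[_ [H _]] _]; auto. Qed.

Lemma Kinf_strict (g : R -> R) : class_Kinf g -> forall x y, 0 <= x -> x < y -> g x < g y.
Proof. intros [[_ [_ [H _]]] _]; auto. Qed.

Lemma Kinf_pos (g : R -> R) : class_Kinf g -> forall x, 0 < x -> 0 < g x.
Proof. intros H x Hx. rewrite <- (Kinf_zero g H). apply (Kinf_strict g H); lra. Qed.

Lemma Kinf_cont (g : R -> R) : class_Kinf g -> cont_Rplus g.
Proof. intros [[H _] _]; auto. Qed.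

Lemma Kinf_unb (g : R -> R) : class_Kinf g -> forall M, exists x, 0 <= x /\ M < g x.
Proof. intros [_ H]; auto. Qed.

Definition uvec {I : Type} (Ii : I -> list I) (gam : I -> I -> R -> R) (i : I) (s : I -> R) : I -> R :=
  fun j => if excluded_middle_informative (In j (Ii i)) then gam i j (s j) else 0.

Fixpoint lsum {I : Type} (f : I -> R) (l : list I) : R :=
  match l with nil => 0 | cons x l' => f x + lsum f l' end.

Lemma lsum_nonneg {I : Type} (f : I -> R) (l : list I) :
  (forall j, In j l -> 0 <= f j) -> 0 <= lsum f l.
Proof.
  induction l as [|y l IH2]; simpl; intros Hf; [lra|].
  assert (0 <= f y) by (apply Hf; simpl; auto).
  assert (0 <= lsum f l) by (apply IH2; intros z Hz; apply Hf; simpl; auto). lra.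
Qed.

Lemma lsum_ge {I : Type} (f : I -> R) (l : list I) :
  (forall j, In j l -> 0 <= f j) -> forall j, In j l -> f j <= lsum f l.
Proof.
  induction l as [|x l IH]; simpl; intros Hf j Hj; [contradiction|].
  assert (Hs : 0 <= lsum f l) by (apply lsum_nonneg; intros; apply Hf; simpl; auto).
  destruct Hj as [->|Hj].
  - lra.
  - assert (0 <= f x) by (apply Hf; auto).
    assert (f j <= lsum f l) by (apply IH; auto). lra.
Qed.

Lemma uvec_linf {I : Type} Ii gam mu (HGam : @is_gain_operator I Ii gam mu) i s :
  vnn s -> linf_plus (uvec Ii gam i s).
Proof.
  intros Hs. destruct HGam as [_ [Hg _]].
  assert (Hnn : forall k, In k (Ii i) -> 0 <= gam i k (s k)).
  { intros k Hk. apply (Kinf_nonneg _ (Hg i k Hk)), Hs. }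
  split.
  - intros j. unfold uvec. destruct excluded_middle_informative; [|lra]. auto.
  - exists (lsum (fun j => gam i j (s j)) (Ii i)). intros j. unfold uvec.
    destruct excluded_middle_informative.
    + apply (lsum_ge (fun j => gam i j (s j))); auto.
    + apply lsum_nonneg; auto.
Qed.

Lemma uvec_van {I : Type} Ii gam i (s : I -> R) : vanishes_off (Ii i) (uvec Ii gam i s).
Proof. intros j Hj. unfold uvec. destruct excluded_middle_informative; tauto. Qed.

Lemma Gam_eq {I : Type} Ii gam mu (s : I -> R) i :
  Gam Ii gam mu s i = real (mu i (uvec Ii gam i s)).
Proof. reflexivity. Qed.

Lemma Gam_fin {I : Type} Ii gam mu (HGam : @is_gain_operator I Ii gam mu) i s :
  vnn s -> is_finite (mu i (uvec Ii gam i s)).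
Proof.
  intros Hs. pose proof HGam as H. destruct H as [_ [_ [_ [_ [_ [_ [HM3 _]]]]]]].
  apply (proj1 (HM3 i (Ii i))). apply (uvec_linf Ii gam mu HGam); auto. apply uvec_van.
Qed.

Lemma Gam_nonneg {I : Type} Ii gam mu (HGam : @is_gain_operator I Ii gam mu) s :
  vnn s -> vnn (Gam Ii gam mu s).
Proof.
  intros Hs i. rewrite Gam_eq. pose proof HGam as H. destruct H as [_ [_ [_ [Hmu _]]]].
  pose proof (Hmu i _ (uvec_linf Ii gam mu HGam i s Hs)) as H0.
  pose proof (Gam_fin Ii gam mu HGam i s Hs) as Hf. unfold is_finite in Hf.
  rewrite <- Hf in H0. simpl in H0. auto.
Qed.

Lemma Gam_mono {I : Type} Ii gam mu (HGam : @is_gain_operator I Ii gam mu) s t :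
  vnn s -> vle s t -> vle (Gam Ii gam mu s) (Gam Ii gam mu t).
Proof.
  intros Hs Hst i. rewrite !Gam_eq.
  assert (Ht : vnn t) by (intros j; specialize (Hs j); specialize (Hst j); lra).
  pose proof HGam as H. destruct H as [_ [Hg [_ [_ [_ [HM2 _]]]]]].
  assert (Hle : Rbar_le (mu i (uvec Ii gam i s)) (mu i (uvec Ii gam i t))).
  { apply HM2; try apply (uvec_linf Ii gam mu HGam); auto.
    intros j. unfold uvec. destruct excluded_middle_informative; [|lra].
    apply (Kinf_mono _ (Hg i j i0)); auto. }
  pose proof (Gam_fin Ii gam mu HGam i s Hs) as Hf1. pose proof (Gam_fin Ii gam mu HGam i t Ht) as Hf2.
  unfold is_finite in *. rewrite <- Hf1, <- Hf2 in Hle. simpl in Hle. auto.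
Qed.

Lemma Gamr_nonneg {I : Type} Ii gam mu (HGam : @is_gain_operator I Ii gam mu) rho s :
  class_Kinf rho -> vnn s -> vnn (Gam_rho Ii gam mu rho s).
Proof.
  intros Hr Hs i. unfold Gam_rho. pose proof (Gam_nonneg Ii gam mu HGam s Hs i).
  pose proof (Kinf_nonneg rho Hr _ H). lra.
Qed.

Lemma Gamr_mono {I : Type} Ii gam mu (HGam : @is_gain_operator I Ii gam mu) rho s t :
  class_Kinf rho -> vnn s -> vle s t ->
  vle (Gam_rho Ii gam mu rho s) (Gam_rho Ii gam mu rho t).
Proof.
  intros Hr Hs Hst i. unfold Gam_rho. pose proof (Gam_nonneg Ii gam mu HGam s Hs i).
  pose proof (Gam_mono Ii gam mu HGam s t Hs Hst i).
  pose proof (Kinf_mono rho Hr _ _ H H0). lra.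
Qed.

Lemma iter_nonneg {I : Type} (T : (I -> R) -> I -> R) :
  (forall s, vnn s -> vnn (T s)) -> forall n s, vnn s -> vnn (Nat.iter n T s).
Proof. intros HT n; induction n; simpl; auto. Qed.

Lemma iter_mono {I : Type} (T : (I -> R) -> I -> R) :
  (forall s, vnn s -> vnn (T s)) ->
  (forall s t, vnn s -> vle s t -> vle (T s) (T t)) ->
  forall n s t, vnn s -> vle s t -> vle (Nat.iter n T s) (Nat.iter n T t).
Proof.
  intros H1 H2 n; induction n; simpl; intros s t Hs Hst; auto.
  apply H2; auto. apply iter_nonneg; auto.
Qed.

Lemma Rmax0_dist x y : 0 <= x -> Rabs (Rmax y 0 - x) <= Rabs (y - x).
Proof.
  intros Hx. unfold Rmax. destruct Rle_dec; unfold Rabs; repeat destruct Rcase_abs; lra.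
Qed.

Lemma cont_ext (g : R -> R) : cont_Rplus g -> continuity (fun x => g (Rmax x 0)).
Proof.
  intros Hg x. unfold continuity_pt, continue_in, limit1_in, limit_in. simpl. unfold R_dist.
  intros eps Heps.
  destruct (Rlt_le_dec x 0) as [Hx|Hx].
  - exists (- x). split; [lra|]. intros y [_ Hy].
    assert (y < 0) by (unfold Rabs in Hy; destruct Rcase_abs; lra).
    rewrite !Rmax_right by lra. rewrite Rminus_diag, Rabs_R0; lra.
  - destruct (Hg x Hx eps Heps) as [d [Hd Hd2]]. exists d. split; auto.
    intros y [_ Hy]. rewrite (Rmax_left x 0) by lra. apply Hd2.
    apply Rmax_r. eapply Rle_lt_trans; [apply Rmax0_dist; auto|]; auto.
Qed.

Definition Kinv (g : R -> R) (y : R) : R :=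
  ClassicalEpsilon.epsilon (inhabits 0) (fun x => 0 <= x /\ g x = y).

Lemma Kinv_ex (g : R -> R) (Hg : class_Kinf g) y : 0 <= y -> exists x, 0 <= x /\ g x = y.
Proof.
  intros Hy. destruct (Req_dec y 0) as [->|Hy0].
  { exists 0. split; [lra|]. apply Kinf_zero; auto. }
  destruct (Kinf_unb g Hg y) as [X [HX HXy]].
  assert (HX0 : 0 < X).
  { destruct (Req_dec X 0) as [->|]; [|lra]. rewrite Kinf_zero in HXy; auto. lra. }
  destruct (IVT (fun x => g (Rmax x 0) - y) 0 X) as [z [Hz1 Hz2]].
  - apply continuity_minus. apply cont_ext, Kinf_cont; auto. apply continuity_const. intros a b; auto.
  - auto.
  - simpl. rewrite !Rmax_left by lra. rewrite Kinf_zero by auto. lra.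
  - simpl. rewrite !Rmax_left by lra. lra.
  - exists z. rewrite Rmax_left in Hz2 by lra. split; lra.
Qed.

Lemma Kinv_spec (g : R -> R) (Hg : class_Kinf g) y : 0 <= y -> 0 <= Kinv g y /\ g (Kinv g y) = y.
Proof.
  intros Hy. unfold Kinv. apply ClassicalEpsilon.epsilon_spec. apply Kinv_ex; auto.
Qed.

Lemma Kinf_inj (g : R -> R) (Hg : class_Kinf g) x y : 0 <= x -> 0 <= y -> g x = g y -> x = y.
Proof.
  intros Hx Hy He. destruct (Rtotal_order x y) as [H|[H|H]]; auto.
  - pose proof (Kinf_strict g Hg x y Hx H); lra.
  - pose proof (Kinf_strict g Hg y x Hy H); lra.
Qed.

Lemma Kinv_g (g : R -> R) (Hg : class_Kinf g) x : 0 <= x -> Kinv g (g x) = x.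
Proof.
  intros Hx. pose proof (Kinf_nonneg g Hg x Hx).
  destruct (Kinv_spec g Hg (g x) H) as [H1 H2]. apply (Kinf_inj g Hg); auto.
Qed.

Lemma Kinv_strict (g : R -> R) (Hg : class_Kinf g) y y' : 0 <= y -> y < y' -> Kinv g y < Kinv g y'.
Proof.
  intros Hy Hyy. destruct (Kinv_spec g Hg y Hy) as [A1 A2].
  destruct (Kinv_spec g Hg y') as [B1 B2]; [lra|].
  destruct (Rlt_le_dec (Kinv g y) (Kinv g y')) as [H|H]; auto.
  pose proof (Kinf_mono g Hg _ _ B1 H). lra.
Qed.

Lemma Kinv_cont (g : R -> R) (Hg : class_Kinf g) : cont_Rplus (Kinv g).
Proof.
  intros y0 Hy0 eps Heps.
  destruct (Kinv_spec g Hg y0 Hy0) as [A1 A2]. set (x0 := Kinv g y0) in *.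
  assert (Hup : y0 < g (x0 + eps)) by (rewrite <- A2; apply (Kinf_strict g Hg); lra).
  destruct (Rlt_le_dec (x0 - eps) 0) as [Hlo|Hlo].
  - exists (g (x0 + eps) - y0). split; [lra|]. intros y Hy Hyy.
    destruct (Kinv_spec g Hg y Hy) as [B1 B2].
    assert (Kinv g y < x0 + eps).
    { destruct (Rlt_le_dec (Kinv g y) (x0 + eps)) as [H|H]; auto.
      pose proof (Kinf_mono g Hg (x0 + eps) _ ltac:(lra) H). unfold Rabs in Hyy; destruct Rcase_abs; lra. }
    unfold Rabs; destruct Rcase_abs; lra.
  - assert (Hdn : g (x0 - eps) < y0) by (rewrite <- A2; apply (Kinf_strict g Hg); lra).
    exists (Rmin (g (x0 + eps) - y0) (y0 - g (x0 - eps))). split.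
    { apply Rmin_glb_lt; lra. }
    intros y Hy Hyy.
    assert (H1 : Rabs (y - y0) < g (x0 + eps) - y0) by (eapply Rlt_le_trans; [apply Hyy|apply Rmin_l]).
    assert (H2 : Rabs (y - y0) < y0 - g (x0 - eps)) by (eapply Rlt_le_trans; [apply Hyy|apply Rmin_r]).
    destruct (Kinv_spec g Hg y Hy) as [B1 B2].
    assert (HH1 : Kinv g y < x0 + eps).
    { destruct (Rlt_le_dec (Kinv g y) (x0 + eps)) as [H|H]; auto.
      pose proof (Kinf_mono g Hg (x0 + eps) _ ltac:(lra) H). unfold Rabs in H1; destruct Rcase_abs; lra. }
    assert (HH2 : x0 - eps < Kinv g y).
    { destruct (Rlt_le_dec (x0 - eps) (Kinv g y)) as [H|H]; auto.
      pose proof (Kinf_mono g Hg _ _ B1 H). unfold Rabs in H2; destruct Rcase_abs; lra. }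
    unfold Rabs; destruct Rcase_abs; lra.
Qed.

Lemma cont_Rplus_comp (f g : R -> R) :
  cont_Rplus f -> cont_Rplus g -> (forall x, 0 <= x -> 0 <= g x) -> cont_Rplus (fun x => f (g x)).
Proof.
  intros Hf Hg Hgp x Hx eps Heps.
  destruct (Hf (g x) (Hgp x Hx) eps Heps) as [d1 [Hd1 H1]].
  destruct (Hg x Hx d1 Hd1) as [d2 [Hd2 H2]].
  exists d2. split; [auto|]. intros y Hy Hyx. apply H1; auto.
Qed.

Lemma Kcomp_inv (F g : R -> R) : class_Kinf F -> class_Kinf g -> class_Kinf (fun r => F (Kinv g r)).
Proof.
  intros HF Hg. split; [split; [|split; [|split]]|].
  - apply cont_Rplus_comp. apply Kinf_cont; auto. apply Kinv_cont; auto.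
    intros x Hx; apply (Kinv_spec g Hg x Hx).
  - pose proof (Kinv_g g Hg 0 (Rle_refl 0)). rewrite Kinf_zero in H by auto. rewrite H.
    apply Kinf_zero; auto.
  - intros x y Hx Hxy. apply (Kinf_strict F HF). apply (Kinv_spec g Hg x Hx).
    apply Kinv_strict; auto.
  - intros x Hx. apply (Kinf_nonneg F HF). apply (Kinv_spec g Hg x Hx).
  - intros M. destruct (Kinf_unb F HF M) as [x [Hx HM]].
    exists (g x). split. apply (Kinf_nonneg g Hg); auto. rewrite Kinv_g; auto.
Qed.

Lemma half_Kinf (g : R -> R) : class_Kinf g -> class_Kinf (fun x => g x / 2).
Proof.
  intros Hg. split; [split; [|split; [|split]]|].
  - intros x Hx eps Heps. destruct (Kinf_cont g Hg x Hx eps Heps) as [d [Hd H]].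
    exists d; split; [auto|]. intros y Hy Hyx. specialize (H y Hy Hyx).
    replace (g y / 2 - g x / 2) with ((g y - g x) / 2) by field.
    unfold Rdiv. rewrite Rabs_mult. rewrite (Rabs_pos_eq (/2)) by lra. lra.
  - rewrite Kinf_zero; auto; lra.
  - intros x y Hx Hxy. pose proof (Kinf_strict g Hg x y Hx Hxy); lra.
  - intros x Hx. pose proof (Kinf_nonneg g Hg x Hx); lra.
  - intros M. destruct (Kinf_unb g Hg (2 * M)) as [x [Hx H]]. exists x; split; auto; lra.
Qed.

Lemma descent (Q : R -> Prop) a b : a <= b -> Q b ->
  (forall L, a < L -> (forall e, 0 < e -> exists r, L <= r < L + e /\ Q r) ->
     exists r', a <= r' < L /\ Q r') ->
  forall e, 0 < e -> exists r, a <= r < a + e /\ Q r.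
Proof.
  intros Hab Qb Hstep e He. apply NNPP. intros Hn.
  assert (Hn' : forall r, a <= r < a + e -> ~ Q r).
  { intros r Hr HQ. apply Hn. exists r; auto. }
  set (E := fun x => forall r, a <= r < x -> ~ Q r).
  assert (HE : E (a + e)) by (intros r Hr; apply Hn'; auto).
  assert (Hb : bound E).
  { exists b. intros x Hx. destruct (Rle_lt_dec x b) as [H|H]; auto.
    exfalso. apply (Hx b); auto. }
  destruct (completeness E Hb (ex_intro _ _ HE)) as [L [HL1 HL2]].
  assert (HaL : a + e <= L) by (apply HL1; auto).
  assert (C1 : forall r, a <= r < L -> ~ Q r).
  { intros r Hr HQ. destruct (classic (exists x, E x /\ r < x)) as [[x [Ex Hx]]|Hno].
    - apply (Ex r); auto; lra.
    - assert (L <= r).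
      { apply HL2. intros x Ex. destruct (Rle_lt_dec x r); auto. exfalso; apply Hno; exists x; auto. }
      lra. }
  assert (C2 : forall e', 0 < e' -> exists r, L <= r < L + e' /\ Q r).
  { intros e' He'. apply NNPP. intros Hno.
    assert (E (L + e')).
    { intros r Hr HQ. destruct (Rlt_le_dec r L).
      - apply (C1 r); auto; lra.
      - apply Hno. exists r. split; auto; lra. }
    pose proof (HL1 _ H). lra. }
  destruct (Hstep L ltac:(lra) C2) as [r' [Hr' HQ]]. apply (C1 r'); auto.
Qed.

Lemma sigma_cont_pt {I : Type} (sigma : R -> I -> R) (phimax : R -> R)
  (Hcont : forall r, 0 <= r -> forall eps, 0 < eps -> exists delta, 0 < delta /\
     forall r', 0 <= r' -> Rabs (r' - r) < delta -> nrm (vsub (sigma r') (sigma r)) < eps)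
  (Hb : forall r, 0 <= r -> forall i, 0 <= sigma r i <= phimax r) :
  forall r, 0 <= r -> forall eps, 0 < eps -> exists delta, 0 < delta /\
     forall r', 0 <= r' -> Rabs (r' - r) < delta -> forall i, Rabs (sigma r' i - sigma r i) < eps.
Proof.
  intros r Hr eps Heps. destruct (Hcont r Hr eps Heps) as [d [Hd H]].
  exists d; split; [auto|]. intros r' Hr' Hrr i.
  eapply Rle_lt_trans; [|apply (H r' Hr' Hrr)].
  apply (nrm_ge (vsub (sigma r') (sigma r)) i). exists (phimax r' + phimax r).
  intros j. unfold vsub. pose proof (Hb r Hr j). pose proof (Hb r' Hr' j).
  unfold Rabs; destruct Rcase_abs; lra.
Qed.

Definition Setup {I : Type} Ii gam mu (sigma : R -> I -> R) rt phimin phimax : Prop :=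
  is_gain_operator Ii gam mu /\ class_Kinf rt /\ class_Kinf phimin /\ class_Kinf phimax /\
  (forall r, 0 <= r -> forall i, Gam_rho Ii gam mu rt (sigma r) i <= sigma r i) /\
  (forall r, 0 <= r -> forall i, phimin r <= sigma r i <= phimax r) /\
  (forall r, 0 <= r -> forall eps, 0 < eps -> exists delta, 0 < delta /\
     forall r', 0 <= r' -> Rabs (r' - r) < delta -> nrm (vsub (sigma r') (sigma r)) < eps).


Lemma S_sig_nn {I : Type} Ii gam mu (sigma : R -> I -> R) rt phimin phimax :
  Setup Ii gam mu sigma rt phimin phimax -> forall r, 0 <= r -> vnn (sigma r).
Proof.
  intros [HG [Hrt [Hmin [Hmax [Hd [Hb Hc]]]]]] r Hr i.
  pose proof (Hb r Hr i). pose proof (Kinf_nonneg _ Hmin r Hr). lra.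
Qed.

Lemma S_sig_cont {I : Type} Ii gam mu (sigma : R -> I -> R) rt phimin phimax :
  Setup Ii gam mu sigma rt phimin phimax ->
  forall r, 0 <= r -> forall eps, 0 < eps -> exists delta, 0 < delta /\
     forall r', 0 <= r' -> Rabs (r' - r) < delta -> forall i, Rabs (sigma r' i - sigma r i) < eps.
Proof.
  intros HS. pose proof (S_sig_nn _ _ _ _ _ _ _ HS) as Hnn.
  destruct HS as [HG [Hrt [Hmin [Hmax [Hd [Hb Hc]]]]]].
  apply (sigma_cont_pt sigma phimax); auto.
  intros r Hr i. split. apply Hnn; auto. apply Hb; auto.
Qed.

Lemma S_T_nn {I : Type} Ii gam mu (sigma : R -> I -> R) rt phimin phimax :
  Setup Ii gam mu sigma rt phimin phimax ->
  forall s, vnn s -> vnn (Gam_rho Ii gam mu (fun x => rt x / 2) s).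
Proof.
  intros [HG [Hrt _]] s Hs. apply Gamr_nonneg; auto. apply half_Kinf; auto.
Qed.

Lemma S_T_mono {I : Type} Ii gam mu (sigma : R -> I -> R) rt phimin phimax :
  Setup Ii gam mu sigma rt phimin phimax ->
  forall s t, vnn s -> vle s t ->
  vle (Gam_rho Ii gam mu (fun x => rt x / 2) s) (Gam_rho Ii gam mu (fun x => rt x / 2) t).
Proof.
  intros [HG [Hrt _]] s t Hs Hst. apply Gamr_mono; auto. apply half_Kinf; auto.
Qed.

Lemma S_weak {I : Type} Ii gam mu (sigma : R -> I -> R) rt phimin phimax :
  Setup Ii gam mu sigma rt phimin phimax ->
  forall r, 0 <= r -> vle (Gam_rho Ii gam mu (fun x => rt x / 2) (sigma r)) (sigma r).
Proof.
  intros HS r Hr i. pose proof (S_sig_nn _ _ _ _ _ _ _ HS r Hr) as Hnn.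
  destruct HS as [HG [Hrt [Hmin [Hmax [Hd [Hb Hc]]]]]].
  specialize (Hd r Hr i). unfold Gam_rho in *.
  pose proof (Gam_nonneg Ii gam mu HG _ Hnn i).
  pose proof (Kinf_nonneg rt Hrt _ H). lra.
Qed.

Lemma S_decr {I : Type} Ii gam mu (sigma : R -> I -> R) rt phimin phimax :
  Setup Ii gam mu sigma rt phimin phimax ->
  forall a, 0 < a -> exists eta, 0 < eta /\ forall r, a <= r -> forall i,
    Gam_rho Ii gam mu (fun x => rt x / 2) (sigma r) i <= sigma r i - eta.
Proof.
  intros HS a Ha. pose proof (S_sig_nn _ _ _ _ _ _ _ HS) as Hnn.
  destruct HS as [HG [Hrt [Hmin [Hmax [Hd [Hb Hc]]]]]].
  set (m := phimin a / 2).
  assert (Hm : 0 < m) by (unfold m; pose proof (Kinf_pos _ Hmin a Ha); lra).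
  destruct (Kinf_cont rt Hrt 0 (Rle_refl 0) m Hm) as [d [Hdpos Hdd]].
  set (c := Rmin (d / 2) (m / 2)).
  assert (Hc0 : 0 < c) by (unfold c; apply Rmin_glb_lt; lra).
  assert (Hcm : c <= m / 2) by (unfold c; apply Rmin_r).
  assert (Hrc : rt c < m).
  { assert (Rabs (rt c - rt 0) < m).
    { apply Hdd. lra. rewrite Rminus_0_r, Rabs_pos_eq by lra.
      unfold c. eapply Rle_lt_trans; [apply Rmin_l|]. lra. }
    rewrite Kinf_zero in H by auto. rewrite Rminus_0_r in H.
    unfold Rabs in H; destruct Rcase_abs; lra. }
  assert (Hrc0 : 0 < rt c) by (apply Kinf_pos; auto).
  exists (Rmin (rt c / 2) m). split. { apply Rmin_glb_lt; lra. }
  intros r Hr i.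
  assert (Hr0 : 0 <= r) by lra.
  pose proof (Hd r Hr0 i) as Hdec. unfold Gam_rho in *.
  set (g := Gam Ii gam mu (sigma r) i) in *.
  assert (Hg : 0 <= g) by (apply (Gam_nonneg Ii gam mu HG); auto).
  assert (Hx : 2 * m <= sigma r i).
  { unfold m. pose proof (Hb r Hr0 i). pose proof (Kinf_mono _ Hmin a r ltac:(lra) Hr). lra. }
  pose proof (Rmin_l (rt c / 2) m). pose proof (Rmin_r (rt c / 2) m).
  destruct (Rle_lt_dec c g) as [Hcg|Hcg].
  - pose proof (Kinf_mono rt Hrt c g ltac:(lra) Hcg). lra.
  - pose proof (Kinf_mono rt Hrt g c Hg ltac:(lra)). lra.
Qed.

Lemma S_iter_dec {I : Type} Ii gam mu (sigma : R -> I -> R) rt phimin phimax :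
  Setup Ii gam mu sigma rt phimin phimax -> forall r0, 0 <= r0 ->
  forall n, vle (Nat.iter (S n) (Gam_rho Ii gam mu (fun x => rt x / 2)) (sigma r0))
                (Nat.iter n (Gam_rho Ii gam mu (fun x => rt x / 2)) (sigma r0)).
Proof.
  intros HS r0 Hr0 n. induction n.
  - simpl. apply (S_weak _ _ _ _ _ _ _ HS); auto.
  - change (Nat.iter (S (S n)) ?T ?s) with (T (Nat.iter (S n) T s)).
    change (Nat.iter (S n) ?T ?s) with (T (Nat.iter n T s)) at 2.
    apply (S_T_mono _ _ _ _ _ _ _ HS); auto.
    apply iter_nonneg. apply (S_T_nn _ _ _ _ _ _ _ HS). apply (S_sig_nn _ _ _ _ _ _ _ HS); auto.
Qed.

Lemma S_iter_dec2 {I : Type} Ii gam mu (sigma : R -> I -> R) rt phimin phimax :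
  Setup Ii gam mu sigma rt phimin phimax -> forall r0, 0 <= r0 ->
  forall n m, (m <= n)%nat -> vle (Nat.iter n (Gam_rho Ii gam mu (fun x => rt x / 2)) (sigma r0))
                (Nat.iter m (Gam_rho Ii gam mu (fun x => rt x / 2)) (sigma r0)).
Proof.
  intros HS r0 Hr0 n m Hmn. induction Hmn.
  - intros i; lra.
  - intros i. pose proof (S_iter_dec _ _ _ _ _ _ _ HS r0 Hr0 m0 i). specialize (IHHmn i). lra.
Qed.

Lemma S_attr {I : Type} Ii gam mu (sigma : R -> I -> R) rt phimin phimax :
  Setup Ii gam mu sigma rt phimin phimax -> forall r0, 0 <= r0 ->
  forall eps, 0 < eps -> exists N, forall n, (N <= n)%nat -> forall i,
    Nat.iter n (Gam_rho Ii gam mu (fun x => rt x / 2)) (sigma r0) i <= eps.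
Proof.
  intros HS r0 Hr0 eps Heps.
  set (T := Gam_rho Ii gam mu (fun x => rt x / 2)).
  set (v := fun n => Nat.iter n T (sigma r0)).
  assert (Hvnn : forall n, vnn (v n)).
  { intros n. apply iter_nonneg. apply (S_T_nn _ _ _ _ _ _ _ HS). apply (S_sig_nn _ _ _ _ _ _ _ HS); auto. }
  set (Q := fun r => 0 <= r /\ exists N, vle (v N) (sigma r)).
  assert (HQ : forall e, 0 < e -> exists r, 0 <= r < 0 + e /\ Q r).
  { apply (descent Q 0 r0 Hr0).
    - split; auto. exists O. intros i; simpl; lra.
    - intros L HL Happ.
      destruct (S_decr _ _ _ _ _ _ _ HS L HL) as [eta [Heta Hdec]].
      destruct (S_sig_cont _ _ _ _ _ _ _ HS L ltac:(lra) (eta / 2) ltac:(lra)) as [d [Hd Hsc]].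
      destruct (Happ d Hd) as [r [Hr [Hr0' [N HN]]]].
      exists (Rmax 0 (L - d / 2)). split.
      { split. apply Rmax_l. apply Rmax_lub_lt; lra. }
      split. apply Rmax_l. exists (S N). intros i.
      change (v (S N)) with (T (v N)).
      assert (H1 : T (v N) i <= T (sigma r) i) by (apply (S_T_mono _ _ _ _ _ _ _ HS); auto).
      assert (H2 : T (sigma r) i <= sigma r i - eta) by (apply Hdec; lra).
      assert (H3 : Rabs (sigma r i - sigma L i) < eta / 2) by (apply Hsc; try lra; rewrite Rabs_pos_eq; lra).
      assert (H4 : Rabs (sigma (Rmax 0 (L - d / 2)) i - sigma L i) < eta / 2).
      { apply Hsc. apply Rmax_l. unfold Rmax; destruct Rle_dec; unfold Rabs; destruct Rcase_abs; lra. }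
      unfold Rabs in H3, H4; repeat destruct Rcase_abs; lra. }
  destruct HS as [HG [Hrt [Hmin [Hmax [Hd [Hb Hc]]]]]].
  destruct (Kinf_cont phimax Hmax 0 (Rle_refl 0) eps Heps) as [d0 [Hd0 Hd0']].
  destruct (HQ d0 Hd0) as [r [Hr [_ [N HN]]]].
  exists N. intros n Hn i.
  assert (v n i <= v N i) by (apply (S_iter_dec2 _ _ _ _ _ _ _ (conj HG (conj Hrt (conj Hmin (conj Hmax (conj Hd (conj Hb Hc))))))); auto).
  specialize (HN i). pose proof (Hb r ltac:(lra) i).
  assert (Rabs (phimax r - phimax 0) < eps) by (apply Hd0'; try lra; rewrite Rminus_0_r, Rabs_pos_eq; lra).
  rewrite Kinf_zero in H1 by auto. rewrite Rminus_0_r in H1. unfold Rabs in H1; destruct Rcase_abs; unfold v in *; lra.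
Qed.

Lemma S_MBI {I : Type} Ii gam mu (sigma : R -> I -> R) rt phimin phimax :
  Setup Ii gam mu sigma rt phimin phimax ->
  forall s b, linf_plus s -> linf_plus b ->
   (forall i, s i <= Rmax (b i) (Gam_rho Ii gam mu (fun x => rt x / 2) s i)) ->
   nrm s <= phimax (Kinv phimin (nrm b)).
Proof.
  intros HS s b Hs Hb0 Hsb.
  set (T := Gam_rho Ii gam mu (fun x => rt x / 2)) in *.
  pose proof HS as HS'. destruct HS' as [HG [Hrt [Hmin [Hmax [Hd [Hb Hc]]]]]].
  set (x := nrm b). assert (Hx : 0 <= x) by apply nrm_nonneg.
  destruct (Kinv_spec phimin Hmin x Hx) as [Ha0 Hax]. set (a := Kinv phimin x) in *.
  assert (Hsnn : vnn s) by (destruct Hs; auto).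
  assert (Hsle : forall i, s i <= nrm s) by (intros i; apply nrm_ge_nonneg; auto; destruct Hs; auto).
  assert (Hble : forall i, b i <= x) by (intros i; apply nrm_ge_nonneg; destruct Hb0; auto).
  set (Q := fun r => vle s (sigma r)).
  destruct (Kinf_unb phimin Hmin (Rmax (nrm s) x)) as [X [HX HXb]].
  assert (HaX : a <= X).
  { destruct (Rle_lt_dec a X) as [H|H]; auto.
    pose proof (Kinf_strict phimin Hmin X a HX H). pose proof (Rmax_r (nrm s) x). lra. }
  assert (HQX : Q X).
  { intros i. pose proof (Hsle i). pose proof (Rmax_l (nrm s) x). pose proof (Hb X HX i). lra. }
  assert (HQ : forall e, 0 < e -> exists r, a <= r < a + e /\ Q r).
  { apply (descent Q a X HaX HQX).
    intros L HL Happ.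
    destruct (S_decr _ _ _ _ _ _ _ HS L ltac:(lra)) as [eta [Heta Hdec]].
    destruct (S_sig_cont _ _ _ _ _ _ _ HS L ltac:(lra) (eta / 2) ltac:(lra)) as [d [Hd' Hsc]].
    destruct (Happ d Hd') as [r [Hr HQr]].
    set (r' := Rmax a (L - d / 2)).
    assert (Hr'1 : a <= r') by apply Rmax_l.
    assert (Hr'2 : r' < L) by (apply Rmax_lub_lt; lra).
    exists r'. split; [lra|]. intros i.
    pose proof (Hsb i) as Hsbi.
    assert (HB : b i <= sigma r' i).
    { pose proof (Hble i). pose proof (Kinf_mono phimin Hmin a r' Ha0 Hr'1). pose proof (Hb r' ltac:(lra) i). lra. }
    assert (HT : T s i <= sigma r' i).
    { assert (H1 : T s i <= T (sigma r) i) by (apply (S_T_mono _ _ _ _ _ _ _ HS); auto).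
      assert (H2 : T (sigma r) i <= sigma r i - eta) by (apply Hdec; lra).
      assert (H3 : Rabs (sigma r i - sigma L i) < eta / 2) by (apply Hsc; try lra; rewrite Rabs_pos_eq; lra).
      assert (H4 : Rabs (sigma r' i - sigma L i) < eta / 2).
      { apply Hsc. lra. unfold r', Rmax; destruct Rle_dec; unfold Rabs; destruct Rcase_abs; lra. }
      unfold Rabs in H3, H4; repeat destruct Rcase_abs; lra. }
    unfold Rmax in Hsbi; destruct Rle_dec; lra. }
  apply nrm_le_nonneg; auto. apply (Kinf_nonneg _ Hmax); auto.
  intros i. apply Rnot_lt_le. intros Hlt.
  destruct (Kinf_cont phimax Hmax a Ha0 (s i - phimax a) ltac:(lra)) as [d [Hd0 Hd1]].
  destruct (HQ d Hd0) as [r [Hr HQr]].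
  specialize (HQr i). pose proof (Hb r ltac:(lra) i).
  assert (Rabs (phimax r - phimax a) < s i - phimax a) by (apply Hd1; try lra; rewrite Rabs_pos_eq; lra).
  unfold Rabs in H0; destruct Rcase_abs; lra.
Qed.

Definition clamp (y : R) : R := (Rabs y - Rabs (y - 1) + 1) / 2.

Lemma clamp_0 y : y <= 0 -> clamp y = 0.
Proof. intros H. unfold clamp. unfold Rabs; repeat destruct Rcase_abs; lra. Qed.
Lemma clamp_1 y : 1 <= y -> clamp y = 1.
Proof. intros H. unfold clamp. unfold Rabs; repeat destruct Rcase_abs; lra. Qed.
Lemma clamp_mono y z : y <= z -> clamp y <= clamp z.
Proof. intros H. unfold clamp. unfold Rabs; repeat destruct Rcase_abs; lra. Qed.
Lemma clamp_cont : continuity clamp.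
Proof.
  intros x. unfold clamp. apply continuity_pt_mult.
  2:{ apply continuity_pt_const. intros a b; auto. }
  apply continuity_pt_plus. apply continuity_pt_minus.
  - apply Rcontinuity_abs.
  - apply (continuity_pt_comp (fun y => y - 1) Rabs). apply continuity_pt_minus.
    apply continuity_pt_id. apply continuity_pt_const; intros a b; auto. apply Rcontinuity_abs.
  - apply continuity_pt_const; intros a b; auto.
Qed.

Fixpoint FK (a : nat -> R) (K : nat) (x : R) : R :=
  match K with
  | O => a O
  | S k => FK a k x + (a (S k) - a k) * clamp (x - INR k)
  end.

Definition PL (a : nat -> R) (x : R) : R := FK a (Z.to_nat (up x)) x.

Lemma FK_stable a K x : x <= INR K -> FK a (S K) x = FK a K x.
Proof. intros H. simpl. rewrite clamp_0 by lra. ring. Qed.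

Lemma FK_stable2 a K x : x <= INR K -> forall K', (K <= K')%nat -> FK a K' x = FK a K x.
Proof.
  intros H K' HK. induction HK; auto.
  rewrite FK_stable; auto. apply le_INR in HK. lra.
Qed.

Lemma FK_stable3 a K1 K2 x : x <= INR K1 -> x <= INR K2 -> FK a K1 x = FK a K2 x.
Proof.
  intros H1 H2. destruct (Nat.le_ge_cases K1 K2).
  - symmetry; apply FK_stable2; auto.
  - apply FK_stable2; auto.
Qed.

Lemma Kx_ge x : x <= INR (Z.to_nat (up x)).
Proof.
  destruct (archimed x) as [H1 H2]. destruct (Z.lt_ge_cases (up x) 0) as [Hn|Hp].
  - destruct (up x) eqn:E; try lia. rewrite Z2Nat.inj_neg. simpl. apply IZR_lt in Hn. lra.
  - rewrite INR_IZR_INZ, Z2Nat.id by lia. lra.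
Qed.

Lemma FK_top a m x : INR m <= x -> FK a m x = a m.
Proof.
  induction m; intros H; simpl; auto.
  rewrite IHm. rewrite clamp_1. ring. rewrite S_INR in H; lra. rewrite S_INR in H; lra.
Qed.

Lemma PL_int a m : PL a (INR m) = a m.
Proof.
  unfold PL. rewrite (FK_stable3 a _ m). apply FK_top; lra. apply Kx_ge. lra.
Qed.

Lemma PL_FK a K x : x <= INR K -> PL a x = FK a K x.
Proof. intros H. unfold PL. apply FK_stable3; auto. apply Kx_ge. Qed.

Lemma FK_cont a K : continuity (FK a K).
Proof.
  induction K; simpl; intros x.
  - apply continuity_pt_const. intros u v; auto.
  - apply continuity_pt_plus. apply IHK. apply continuity_pt_mult.
    apply continuity_pt_const. intros u v; auto.
    apply (continuity_pt_comp (fun y => y - INR K) clamp).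
    apply continuity_pt_minus. apply continuity_pt_id. apply continuity_pt_const; intros u v; auto.
    apply clamp_cont.
Qed.

Lemma PL_cont a : continuity (PL a).
Proof.
  intros x0. set (K := Z.to_nat (up (x0 + 1))).
  assert (HK : x0 + 1 <= INR K) by apply Kx_ge.
  apply (continuity_pt_locally_ext (FK a K) (PL a) 1 x0); [lra| |apply FK_cont].
  intros y Hy. unfold Rdist, Rabs in Hy. destruct Rcase_abs in Hy; symmetry; apply PL_FK; lra.
Qed.

Lemma FK_mono_up a K x y : (forall n, a n <= a (S n)) -> x <= y -> FK a K x <= FK a K y.
Proof.
  intros Ha Hxy. induction K; simpl; [lra|].
  pose proof (clamp_mono (x - INR K) (y - INR K) ltac:(lra)). specialize (Ha K).
  apply Rplus_le_compat; auto. apply Rmult_le_compat_l; lra.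
Qed.

Lemma FK_mono_dn a K x y : (forall n, a (S n) <= a n) -> x <= y -> FK a K y <= FK a K x.
Proof.
  intros Ha Hxy. induction K; simpl; [lra|].
  pose proof (clamp_mono (x - INR K) (y - INR K) ltac:(lra)). specialize (Ha K).
  apply Rplus_le_compat; auto.
  replace ((a (S K) - a K) * clamp (y - INR K)) with (- ((a K - a (S K)) * clamp (y - INR K))) by ring.
  replace ((a (S K) - a K) * clamp (x - INR K)) with (- ((a K - a (S K)) * clamp (x - INR K))) by ring.
  apply Ropp_le_contravar. apply Rmult_le_compat_l; lra.
Qed.

Lemma PL_mono_up a x y : (forall n, a n <= a (S n)) -> x <= y -> PL a x <= PL a y.
Proof.
  intros Ha Hxy. set (K := Z.to_nat (up y)). assert (y <= INR K) by apply Kx_ge.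
  rewrite (PL_FK a K x), (PL_FK a K y) by lra. apply FK_mono_up; auto.
Qed.

Lemma PL_mono_dn a x y : (forall n, a (S n) <= a n) -> x <= y -> PL a y <= PL a x.
Proof.
  intros Ha Hxy. set (K := Z.to_nat (up y)). assert (y <= INR K) by apply Kx_ge.
  rewrite (PL_FK a K x), (PL_FK a K y) by lra. apply FK_mono_dn; auto.
Qed.

Lemma exp_le x y : x <= y -> exp x <= exp y.
Proof. intros H. destruct (Req_dec x y) as [->|]; [lra|]. left; apply exp_increasing; lra. Qed.

Lemma ln_le' x y : 0 < x -> x <= y -> ln x <= ln y.
Proof. intros H1 H2. destruct (Req_dec x y) as [->|]; [lra|]. left; apply ln_increasing; lra. Qed.

Definition supn (f : nat -> R) : R := real (Lub_Rbar (fun y => exists k, y = f k)).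

Lemma supn_ge (f : nat -> R) B k : (forall k, f k <= B) -> f k <= supn f.
Proof.
  intros HB. unfold supn.
  destruct (Lub_Rbar_correct (fun y => exists k, y = f k)) as [Hub Hl].
  assert (Hle : Rbar_le (Lub_Rbar (fun y => exists k, y = f k)) (Finite B)).
  { apply Hl. intros x [j ->]. simpl. apply HB. }
  assert (H2 := Hub (f k) (ex_intro _ k eq_refl)).
  destruct (Lub_Rbar _); simpl in *; try lra; contradiction.
Qed.

Lemma supn_le (f : nat -> R) B : (forall k, f k <= B) -> supn f <= B.
Proof.
  intros HB. unfold supn.
  destruct (Lub_Rbar_correct (fun y => exists k, y = f k)) as [Hub Hl].
  assert (Hle : Rbar_le (Lub_Rbar (fun y => exists k, y = f k)) (Finite B)).
  { apply Hl. intros x [j ->]. simpl. apply HB. }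
  assert (H2 := Hub (f O) (ex_intro _ O eq_refl)).
  destruct (Lub_Rbar _); simpl in *; try lra; contradiction.
Qed.

Definition HHprop (hh : nat -> nat -> R) : Prop :=
  (forall k n, 0 <= hh k n) /\ (forall k n, hh k (S n) <= hh k n) /\
  (forall k n, hh k n <= hh (S k) n) /\
  (forall k eps, 0 < eps -> exists N, forall n, (N <= n)%nat -> hh k n <= eps).

Lemma hh_mono_n hh : HHprop hh -> forall k m n, (m <= n)%nat -> hh k n <= hh k m.
Proof.
  intros [_ [H _]] k m n Hmn. induction Hmn; [lra|]. specialize (H k m0). lra.
Qed.

Lemma hh_mono_k hh : HHprop hh -> forall k K n, (k <= K)%nat -> hh k n <= hh K n.
Proof.
  intros [_ [_ [H _]]] k K n Hk. induction Hk; [lra|]. specialize (H m n). lra.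
Qed.

Definition Nf (hh : nat -> nat -> R) (k : nat) : nat :=
  ClassicalEpsilon.epsilon (inhabits O) (fun N => forall n, (N <= n)%nat -> hh k n <= / (INR k + 1)).

Lemma Nf_spec hh : HHprop hh -> forall k n, (Nf hh k <= n)%nat -> hh k n <= / (INR k + 1).
Proof.
  intros Hh k. unfold Nf. apply ClassicalEpsilon.epsilon_spec.
  destruct Hh as [_ [_ [_ H]]]. apply H. pose proof (pos_INR k).
  apply Rinv_0_lt_compat. lra.
Qed.

Fixpoint Mf (hh : nat -> nat -> R) (k : nat) : nat :=
  match k with O => Nf hh O | S k' => Nat.max (Mf hh k') (Nf hh (S k')) end.

Lemma Mf_ge hh k : (Nf hh k <= Mf hh k)%nat.
Proof. destruct k; simpl; lia. Qed.

Lemma Mf_mono hh k K : (k <= K)%nat -> (Mf hh k <= Mf hh K)%nat.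
Proof. intros H; induction H; simpl; lia. Qed.

Definition qf (hh : nat -> nat -> R) (m : nat) : R := supn (fun k => hh k (m + Mf hh k)%nat).

Lemma qf_bound hh : HHprop hh -> forall m k, hh k (m + Mf hh k)%nat <= / (INR k + 1).
Proof.
  intros Hh m k. apply Nf_spec; auto. pose proof (Mf_ge hh k). lia.
Qed.

Lemma inv_le1 k : / (INR k + 1) <= 1.
Proof.
  pose proof (pos_INR k). rewrite <- Rinv_1. apply Rinv_le_contravar; lra.
Qed.

Lemma qf_ge hh : HHprop hh -> forall m k, hh k (m + Mf hh k)%nat <= qf hh m.
Proof.
  intros Hh m k. unfold qf. apply (supn_ge (fun k => hh k (m + Mf hh k)%nat) 1 k). intros j.
  eapply Rle_trans. apply qf_bound; auto. apply inv_le1.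
Qed.

Lemma qf_nn hh : HHprop hh -> forall m, 0 <= qf hh m.
Proof.
  intros Hh m. eapply Rle_trans; [|apply (qf_ge hh Hh m O)]. apply Hh.
Qed.

Lemma qf_dec hh : HHprop hh -> forall m, qf hh (S m) <= qf hh m.
Proof.
  intros Hh m. unfold qf at 1. apply supn_le. intros k.
  eapply Rle_trans; [|apply (qf_ge hh Hh m k)]. apply (hh_mono_n hh Hh). lia.
Qed.

Lemma qf_lim hh : HHprop hh -> forall eps, 0 < eps -> exists m0, qf hh m0 <= eps.
Proof.
  intros Hh eps Heps.
  destruct (archimed (/ eps)) as [HK _].
  set (K := Z.to_nat (up (/ eps))).
  assert (HK2 : / eps <= INR K) by apply Kx_ge.
  assert (HKe : / (INR K + 1) <= eps).
  { pose proof (pos_INR K). rewrite <- (Rinv_inv eps). apply Rinv_le_contravar.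
    apply Rinv_0_lt_compat; lra. lra. }
  destruct Hh as [A [B [C D]]]. destruct (D K eps Heps) as [N HN].
  exists N. unfold qf. apply supn_le. intros k.
  destruct (Nat.le_ge_cases K k) as [Hk|Hk].
  - eapply Rle_trans. apply qf_bound. split; auto. eapply Rle_trans; [|apply HKe].
    apply Rinv_le_contravar. pose proof (pos_INR K); lra. apply le_INR in Hk; lra.
  - eapply Rle_trans. apply (hh_mono_n hh (conj A (conj B (conj C D))) k N). lia.
    eapply Rle_trans. apply (hh_mono_k hh (conj A (conj B (conj C D))) k K); auto.
    apply HN; lia.
Qed.

Definition Psi (hh : nat -> nat -> R) (x : R) : R := x + PL (qf hh) (- ln x).

Lemma PLq_nn hh : HHprop hh -> forall u, 0 <= PL (qf hh) u.
Proof.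
  intros Hh u. set (j := Z.to_nat (up u)). assert (u <= INR j) by apply Kx_ge.
  eapply Rle_trans; [|apply (PL_mono_dn (qf hh) u (INR j))]; auto.
  rewrite PL_int. apply qf_nn; auto. apply qf_dec; auto.
Qed.

Lemma Psi_ge hh : HHprop hh -> forall x, x <= Psi hh x.
Proof. intros Hh x. unfold Psi. pose proof (PLq_nn hh Hh (- ln x)). lra. Qed.

Lemma Psi_mono hh : HHprop hh -> forall x y, 0 < x -> x <= y -> Psi hh x <= Psi hh y.
Proof.
  intros Hh x y Hx Hxy. unfold Psi. apply Rplus_le_compat; auto.
  apply PL_mono_dn. apply qf_dec; auto. pose proof (ln_le' x y Hx Hxy). lra.
Qed.

Lemma Psi_exp hh : HHprop hh -> forall m, qf hh m <= Psi hh (exp (- INR m)).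
Proof.
  intros Hh m. unfold Psi. rewrite ln_exp, Ropp_involutive, PL_int. pose proof (exp_pos (- INR m)). lra.
Qed.

Lemma Psi_cont hh : forall x, 0 < x -> continuity_pt (Psi hh) x.
Proof.
  intros x Hx. unfold Psi. apply continuity_pt_plus. apply continuity_pt_id.
  apply (continuity_pt_comp (fun x => - ln x) (PL (qf hh))).
  - apply continuity_pt_opp. apply derivable_continuous_pt. exists (/ x). apply derivable_pt_lim_ln; auto.
  - apply PL_cont.
Qed.

Lemma Psi_small hh : HHprop hh -> forall eps, 0 < eps -> exists c, 0 < c /\
  forall y, 0 < y -> y <= c -> Psi hh y < eps.
Proof.
  intros Hh eps Heps. destruct (qf_lim hh Hh (eps / 2) ltac:(lra)) as [m0 Hm0].
  exists (Rmin (eps / 4) (exp (- INR m0))). split.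
  { apply Rmin_glb_lt. lra. apply exp_pos. }
  intros y Hy Hyc. unfold Psi.
  assert (Hy1 : y <= eps / 4) by (eapply Rle_trans; [apply Hyc|apply Rmin_l]).
  assert (Hy2 : y <= exp (- INR m0)) by (eapply Rle_trans; [apply Hyc|apply Rmin_r]).
  assert (INR m0 <= - ln y).
  { pose proof (ln_le' y _ Hy Hy2). rewrite ln_exp in H. lra. }
  pose proof (PL_mono_dn (qf hh) (INR m0) (- ln y) (qf_dec hh Hh) H). rewrite PL_int in H0. lra.
Qed.

Definition Lf (hh : nat -> nat -> R) (k : nat) : R := exp (INR (Mf hh k)) * (hh k O + 1).
Definition al2 (hh : nat -> nat -> R) : R -> R := PL (fun j => Lf hh (S j)).
Definition ale (al : R -> R) (r : R) : R := al (Rmax r 0).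
Definition beta (al : R -> R) (hh : nat -> nat -> R) (r t : R) : R :=
  ale al r * exp (- t) + Rmin (ale al r) (Psi hh (al2 hh r * exp (- t))).

Lemma clamp_nn y : 0 <= clamp y.
Proof. unfold clamp, Rabs; repeat destruct Rcase_abs; lra. Qed.

Lemma FK_ge0 a K x : (forall n, a n <= a (S n)) -> a O <= FK a K x.
Proof.
  intros Ha. induction K; simpl; [lra|]. pose proof (clamp_nn (x - INR K)). specialize (Ha K).
  assert (0 <= (a (S K) - a K) * clamp (x - INR K)) by (apply Rmult_le_pos; lra). lra.
Qed.

Lemma Lf_mono hh : HHprop hh -> forall n, Lf hh n <= Lf hh (S n).
Proof.
  intros Hh n. unfold Lf. apply Rmult_le_compat.
  - left; apply exp_pos.
  - pose proof (proj1 Hh n O). lra.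
  - apply exp_le. apply le_INR. apply Mf_mono. lia.
  - pose proof (proj1 (proj2 (proj2 Hh)) n O). lra.
Qed.

Lemma Lf_ge1 hh : HHprop hh -> forall n, 1 <= Lf hh n.
Proof.
  intros Hh n. unfold Lf. pose proof (proj1 Hh n O).
  assert (1 <= exp (INR (Mf hh n))) by (rewrite <- exp_0; apply exp_le, pos_INR).
  replace 1 with (1 * 1) by ring. apply Rmult_le_compat; lra.
Qed.

Lemma al2_pos hh : HHprop hh -> forall x, 1 <= al2 hh x.
Proof.
  intros Hh x. unfold al2, PL. eapply Rle_trans; [|apply FK_ge0].
  apply Lf_ge1; auto. intros n; apply Lf_mono; auto.
Qed.

Lemma al2_mono hh : HHprop hh -> forall x y, x <= y -> al2 hh x <= al2 hh y.
Proof. intros Hh x y H. apply PL_mono_up; auto. intros n; apply Lf_mono; auto. Qed.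

Lemma floor_nat r : 0 <= r -> exists j, INR j <= r < INR j + 1.
Proof.
  intros Hr. destruct (archimed r) as [H1 H2].
  assert (Hz : (0 <= up r - 1)%Z).
  { assert (0 < IZR (up r)) by lra. apply lt_0_IZR in H. lia. }
  exists (Z.to_nat (up r - 1)). rewrite INR_IZR_INZ, Z2Nat.id by auto.
  rewrite minus_IZR. lra.
Qed.

Lemma al2_floor hh : HHprop hh -> forall r, 0 <= r -> exists k, r <= INR k /\ Lf hh k <= al2 hh r.
Proof.
  intros Hh r Hr. destruct (floor_nat r Hr) as [j [Hj1 Hj2]].
  exists (S j). split. rewrite S_INR; lra.
  pose proof (al2_mono hh Hh _ _ Hj1). unfold al2 in *. rewrite PL_int in H. auto.
Qed.

Lemma Rmin_formula u v : Rmin u v = (u + v - Rabs (u - v)) / 2.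
Proof. unfold Rmin; destruct Rle_dec; unfold Rabs; destruct Rcase_abs; lra. Qed.

Lemma beta_cont al hh : cont_Rplus al -> HHprop hh -> forall r t, continuity_2d_pt (beta al hh) r t.
Proof.
  intros Hal Hh r t.
  assert (Ha : continuity_2d_pt (fun u v => ale al u) r t).
  { apply (continuity_1d_2d_pt_comp (ale al) (fun u v => u)). apply cont_ext; auto.
    apply continuity_2d_pt_id1. }
  assert (He : continuity_2d_pt (fun u v => exp (- v)) r t).
  { apply (continuity_1d_2d_pt_comp (fun v => exp (- v)) (fun u v => v)).
    apply (continuity_pt_comp Ropp exp). apply continuity_pt_opp, continuity_pt_id.
    apply derivable_continuous_pt, derivable_pt_exp. apply continuity_2d_pt_id2. }
  assert (Hp : continuity_2d_pt (fun u v => Psi hh (al2 hh u * exp (- v))) r t).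
  { apply (continuity_1d_2d_pt_comp (Psi hh) (fun u v => al2 hh u * exp (- v))).
    apply Psi_cont. pose proof (al2_pos hh Hh r). pose proof (exp_pos (- t)).
    apply Rmult_lt_0_compat; lra.
    apply continuity_2d_pt_mult; auto.
    apply (continuity_1d_2d_pt_comp (al2 hh) (fun u v => u)). apply PL_cont. apply continuity_2d_pt_id1. }
  unfold beta. apply continuity_2d_pt_plus. apply continuity_2d_pt_mult; auto.
  apply (continuity_2d_pt_ext (fun u v => (ale al u + Psi hh (al2 hh u * exp (- v))
      - Rabs (ale al u - Psi hh (al2 hh u * exp (- v)))) * / 2)).
  { intros u v. rewrite Rmin_formula. unfold Rdiv. auto. }
  apply continuity_2d_pt_mult. 2: apply continuity_2d_pt_const.
  apply continuity_2d_pt_minus. apply continuity_2d_pt_plus; auto.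
  apply (continuity_1d_2d_pt_comp Rabs (fun u v => ale al u - Psi hh (al2 hh u * exp (- v)))).
  apply Rcontinuity_abs. apply continuity_2d_pt_minus; auto.
Qed.

Lemma c2d_eps f r t : continuity_2d_pt f r t -> forall eps, 0 < eps -> exists delta, 0 < delta /\
  forall r' t', Rabs (r' - r) < delta -> Rabs (t' - t) < delta -> Rabs (f r' t' - f r t) < eps.
Proof.
  intros H eps Heps. destruct (H (mkposreal eps Heps)) as [d Hd].
  exists d. split. apply cond_pos. intros r' t' H1 H2. apply (Hd r' t' H1 H2).
Qed.

Lemma Psi_nn hh : HHprop hh -> forall x, 0 <= x -> 0 <= Psi hh x.
Proof. intros Hh x Hx. pose proof (Psi_ge hh Hh x). lra. Qed.

Lemma beta_KL al hh : class_Kinf al -> HHprop hh -> class_KL (beta al hh).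
Proof.
  intros Hal Hh.
  assert (Hc := beta_cont al hh (Kinf_cont al Hal) Hh).
  assert (Hale : forall r, 0 <= r -> ale al r = al r) by (intros r Hr; unfold ale; rewrite Rmax_left; lra).
  assert (Harg : forall r t, 0 < al2 hh r * exp (- t)).
  { intros r t. pose proof (al2_pos hh Hh r). pose proof (exp_pos (- t)). apply Rmult_lt_0_compat; lra. }
  split; [|split; [|split]].
  - intros r t Hr Ht eps Heps. destruct (c2d_eps _ r t (Hc r t) eps Heps) as [d [Hd H]].
    exists d. split; auto.
  - intros r t Hr Ht. unfold beta. rewrite Hale by auto. pose proof (Kinf_nonneg al Hal r Hr).
    pose proof (exp_pos (- t)). pose proof (Psi_nn hh Hh _ (Rlt_le _ _ (Harg r t))).
    assert (0 <= Rmin (al r) (Psi hh (al2 hh r * exp (- t)))) by (apply Rmin_glb; lra).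
    pose proof (Rmult_le_pos _ _ H (Rlt_le _ _ H0)). lra.
  - intros t Ht. split; [|split; [|split]].
    + intros r Hr eps Heps. destruct (c2d_eps _ r t (Hc r t) eps Heps) as [d [Hd H]].
      exists d. split; auto. intros y Hy Hyr. apply H; auto. rewrite Rminus_diag, Rabs_R0; auto.
    + simpl. unfold beta. rewrite Hale by lra. rewrite Kinf_zero by auto.
      pose proof (Psi_nn hh Hh _ (Rlt_le _ _ (Harg 0 t))). rewrite Rmin_left by lra. ring.
    + intros x y Hx Hxy. unfold beta. rewrite !Hale by lra.
      pose proof (Kinf_strict al Hal x y Hx Hxy). pose proof (exp_pos (- t)).
      assert (al x * exp (- t) < al y * exp (- t)) by (apply Rmult_lt_compat_r; auto).
      assert (Psi hh (al2 hh x * exp (- t)) <= Psi hh (al2 hh y * exp (- t))).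
      { apply Psi_mono; auto. apply Rmult_le_compat_r; [lra|]. apply al2_mono; auto; lra. }
      assert (Rmin (al x) (Psi hh (al2 hh x * exp (- t))) <= Rmin (al y) (Psi hh (al2 hh y * exp (- t)))).
      { unfold Rmin; repeat destruct Rle_dec; lra. }
      lra.
    + intros r Hr. unfold beta. rewrite Hale by auto. pose proof (Kinf_nonneg al Hal r Hr).
      pose proof (exp_pos (- t)). pose proof (Psi_nn hh Hh _ (Rlt_le _ _ (Harg r t))).
      assert (0 <= Rmin (al r) (Psi hh (al2 hh r * exp (- t)))) by (apply Rmin_glb; lra).
      pose proof (Rmult_le_pos _ _ H (Rlt_le _ _ H0)). lra.
  - intros r Hr. pose proof (Kinf_pos al Hal r Hr) as Hpos. split; [|split].
    + intros t Ht eps Heps. destruct (c2d_eps _ r t (Hc r t) eps Heps) as [d [Hd H]].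
      exists d. split; auto. intros y Hy Hyr. apply H; auto. rewrite Rminus_diag, Rabs_R0; auto.
    + intros t t' Ht Htt. unfold beta. rewrite !Hale by lra.
      assert (exp (- t') < exp (- t)) by (apply exp_increasing; lra).
      assert (al r * exp (- t') < al r * exp (- t)) by (apply Rmult_lt_compat_l; auto).
      assert (Psi hh (al2 hh r * exp (- t')) <= Psi hh (al2 hh r * exp (- t))).
      { apply Psi_mono; auto. apply Rmult_le_compat_l; [pose proof (al2_pos hh Hh r); lra|lra]. }
      assert (Rmin (al r) (Psi hh (al2 hh r * exp (- t'))) <= Rmin (al r) (Psi hh (al2 hh r * exp (- t)))).
      { unfold Rmin; repeat destruct Rle_dec; lra. }
      lra.
    + intros eps Heps. destruct (Psi_small hh Hh (eps / 2) ltac:(lra)) as [c [Hc0 Hcs]].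
      pose proof (al2_pos hh Hh r) as Ha2.
      set (kap := Rmin (c / al2 hh r) (eps / (4 * al r))).
      assert (Hk : 0 < kap).
      { unfold kap. apply Rmin_glb_lt; apply Rdiv_lt_0_compat; lra. }
      exists (- ln kap). intros t Ht.
      assert (Het : exp (- t) <= kap).
      { rewrite <- (exp_ln kap Hk). apply exp_le. lra. }
      assert (H1 : exp (- t) <= c / al2 hh r) by (eapply Rle_trans; [apply Het|apply Rmin_l]).
      assert (H2 : exp (- t) <= eps / (4 * al r)) by (eapply Rle_trans; [apply Het|apply Rmin_r]).
      unfold beta. rewrite Hale by lra.
      assert (Hx1 : al r * exp (- t) <= eps / 4).
      { apply (Rmult_le_compat_l (al r)) in H2; [|lra].
        replace (al r * (eps / (4 * al r))) with (eps / 4) in H2 by (field; lra). auto. }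
      assert (Hx2 : al2 hh r * exp (- t) <= c).
      { apply (Rmult_le_compat_l (al2 hh r)) in H1; [|lra].
        replace (al2 hh r * (c / al2 hh r)) with c in H1 by (field; lra). auto. }
      pose proof (Hcs _ (Harg r t) Hx2).
      pose proof (Rmin_r (al r) (Psi hh (al2 hh r * exp (- t)))). lra.
Qed.

Lemma beta_bound al hh : class_Kinf al -> HHprop hh ->
  forall r y (n : nat), 0 <= r -> y <= al r -> (forall k, r <= INR k -> y <= hh k n) ->
  y <= beta al hh r (INR n).
Proof.
  intros Hal Hh r y n Hr Hy1 Hy2.
  assert (Hale : ale al r = al r) by (unfold ale; rewrite Rmax_left; lra).
  destruct (al2_floor hh Hh r Hr) as [k [Hk HL]].
  specialize (Hy2 k Hk).
  assert (Hx : y <= Psi hh (al2 hh r * exp (- INR n))).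
  { destruct (Nat.le_gt_cases n (Mf hh k)) as [Hn|Hn].
    - eapply Rle_trans; [|apply Psi_ge; auto].
      assert (hh k n <= hh k O) by (apply (hh_mono_n hh Hh); lia).
      assert (1 <= exp (INR (Mf hh k)) * exp (- INR n)).
      { rewrite <- exp_plus, <- exp_0. apply exp_le. apply le_INR in Hn. lra. }
      assert (Lf hh k * exp (- INR n) <= al2 hh r * exp (- INR n)) by (apply Rmult_le_compat_r; [left; apply exp_pos|auto]).
      unfold Lf in H1. pose proof (proj1 Hh k O).
      assert ((hh k O + 1) * 1 <= (hh k O + 1) * (exp (INR (Mf hh k)) * exp (- INR n))) by (apply Rmult_le_compat_l; lra).
      nra.
    - set (m := (n - Mf hh k)%nat).
      assert (Hnm : n = (m + Mf hh k)%nat) by (unfold m; lia).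
      eapply Rle_trans; [|eapply Psi_mono; auto].
      + eapply Rle_trans; [|apply (Psi_exp hh Hh m)]. rewrite Hnm in Hy2.
        eapply Rle_trans; [apply Hy2|]. apply qf_ge; auto.
      + apply exp_pos.
      + assert (Lf hh k * exp (- INR n) <= al2 hh r * exp (- INR n)) by (apply Rmult_le_compat_r; [left; apply exp_pos|auto]).
        eapply Rle_trans; [|apply H]. unfold Lf. pose proof (proj1 Hh k O).
        rewrite Rmult_comm, <- Rmult_assoc, <- exp_plus.
        replace (- INR n + INR (Mf hh k)) with (- INR m) by (rewrite Hnm, plus_INR; ring).
        pose proof (exp_pos (- INR m)). nra. }
  unfold beta. rewrite Hale. pose proof (Kinf_nonneg al Hal r Hr). pose proof (exp_pos (- INR n)).
  pose proof (Rmult_le_pos _ _ H (Rlt_le _ _ H0)).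
  assert (y <= Rmin (al r) (Psi hh (al2 hh r * exp (- INR n)))) by (apply Rmin_glb; auto). lra.
Qed.

Fixpoint hhf (h : nat -> nat -> R) (k n : nat) : R :=
  match k with O => h O n | S k' => Rmax (hhf h k' n) (h (S k') n) end.

Lemma hhf_ge h k n : h k n <= hhf h k n.
Proof. destruct k; simpl. lra. apply Rmax_r. Qed.

Lemma hhf_prop h : (forall k n, 0 <= h k n) -> (forall k n, h k (S n) <= h k n) ->
  (forall k eps, 0 < eps -> exists N, forall n, (N <= n)%nat -> h k n <= eps) -> HHprop (hhf h).
Proof.
  intros H1 H2 H3. split; [|split; [|split]].
  - intros k n; induction k; simpl; auto. eapply Rle_trans; [apply IHk|apply Rmax_l].
  - intros k n; induction k; simpl; auto. specialize (H2 (S k) n).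
    apply Rmax_lub. eapply Rle_trans; [apply IHk|apply Rmax_l]. eapply Rle_trans; [apply H2|apply Rmax_r].
  - intros k n. simpl. apply Rmax_l.
  - intros k eps Heps. induction k; simpl; auto.
    destruct IHk as [N1 HN1]. destruct (H3 (S k) eps Heps) as [N2 HN2].
    exists (Nat.max N1 N2). intros n Hn. apply Rmax_lub; [apply HN1|apply HN2]; lia.
Qed.

Theorem theorem3p7 (I : Type) (enum : nat -> I) (enum_surj : forall i : I, exists n, enum n = i)
  (Ii : I -> list I) (gam : I -> I -> R -> R) (mu : I -> (I -> R) -> Rbar)
  (HGam : is_gain_operator Ii gam mu)
  (sigma : R -> (I -> R))
  (Hcont : forall r, 0 <= r -> forall eps, 0 < eps -> exists delta, 0 < delta /\
     forall r', 0 <= r' -> Rabs (r' - r) < delta -> nrm (vsub (sigma r') (sigma r)) < eps)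
  (Hdecay : exists rho_t, class_Kinf rho_t /\
     forall r, 0 <= r -> forall i, Gam_rho Ii gam mu rho_t (sigma r) i <= sigma r i)
  (Hbounds : exists phimin phimax, class_Kinf phimin /\ class_Kinf phimax /\
     forall r, 0 <= r -> forall i, phimin r <= sigma r i <= phimax r) :
  exists rho, class_Kinf rho /\
    UGAS (Gam_rho Ii gam mu rho) /\ oplus_MBI (Gam_rho Ii gam mu rho).
Proof.
  destruct Hdecay as [rt [Hrt Hd]]. destruct Hbounds as [phimin [phimax [Hmin [Hmax Hb]]]].
  assert (HS : Setup Ii gam mu sigma rt phimin phimax) by exact (conj HGam (conj Hrt (conj Hmin (conj Hmax (conj Hd (conj Hb Hcont)))))).
  set (al := fun r => phimax (Kinv phimin r)).
  assert (Hal : class_Kinf al) by (apply Kcomp_inv; auto).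
  exists (fun x => rt x / 2). split; [apply half_Kinf; auto|]. split.
  2:{ exists al. split; auto. intros s b Hs Hb0 Hsb. apply (S_MBI _ _ _ _ _ _ _ HS); auto. }
  set (T := Gam_rho Ii gam mu (fun x => rt x / 2)).
  assert (HTnn := S_T_nn _ _ _ _ _ _ _ HS). fold T in HTnn.
  assert (HTm := S_T_mono _ _ _ _ _ _ _ HS). fold T in HTm.
  set (h := fun k n => nrm (Nat.iter n T (sigma (Kinv phimin (INR k))))).
  assert (Hr0 : forall k : nat, 0 <= Kinv phimin (INR k)) by (intros k; apply (Kinv_spec _ Hmin), pos_INR).
  assert (Hvnn : forall k n, vnn (Nat.iter n T (sigma (Kinv phimin (INR k))))).
  { intros k n. apply iter_nonneg; auto. apply (S_sig_nn _ _ _ _ _ _ _ HS); auto. }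
  assert (Hvb : forall k n, exists M, forall j, Nat.iter n T (sigma (Kinv phimin (INR k))) j <= M).
  { intros k n. exists (phimax (Kinv phimin (INR k))). intros j.
    pose proof (S_iter_dec2 _ _ _ _ _ _ _ HS _ (Hr0 k) n O ltac:(lia) j). simpl in H.
    pose proof (Hb _ (Hr0 k) j). fold T in H. lra. }
  assert (HH : HHprop (hhf h)).
  { apply hhf_prop.
    - intros; apply nrm_nonneg.
    - intros k n. unfold h. apply nrm_le_nonneg. apply nrm_nonneg. auto.
      intros i. pose proof (S_iter_dec _ _ _ _ _ _ _ HS _ (Hr0 k) n i). fold T in H.
      eapply Rle_trans; [apply H|]. apply nrm_ge_nonneg; auto.
    - intros k eps Heps. destruct (S_attr _ _ _ _ _ _ _ HS _ (Hr0 k) eps Heps) as [N HN].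
      exists N. intros n Hn. unfold h. apply nrm_le_nonneg; [lra|auto|]. apply HN; auto. }
  exists (beta al (hhf h)). split. apply beta_KL; auto.
  intros s Hs n. set (r := nrm s).
  assert (Hr : 0 <= r) by apply nrm_nonneg.
  assert (Hsnn : vnn s) by (destruct Hs; auto).
  assert (Hsle : forall i, s i <= r) by (intros i; apply nrm_ge_nonneg; auto; destruct Hs; auto).
  assert (Hlev : forall x, r <= x -> vle s (sigma (Kinv phimin x))).
  { intros x Hx j. destruct (Kinv_spec phimin Hmin x ltac:(lra)) as [A1 A2].
    pose proof (Hb _ A1 j). pose proof (Hsle j). lra. }
  pose proof (beta_KL al (hhf h) Hal HH) as HKL.
  assert (Hbn : 0 <= beta al (hhf h) r (INR n)) by (apply HKL; auto; apply pos_INR).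
  apply nrm_le_nonneg; auto. apply iter_nonneg; auto.
  intros i. apply beta_bound; auto.
  - destruct (Kinv_spec phimin Hmin r Hr) as [A1 A2].
    pose proof (iter_mono T HTnn HTm n s _ Hsnn (Hlev r (Rle_refl r)) i).
    pose proof (S_iter_dec2 _ _ _ _ _ _ _ HS _ A1 n O ltac:(lia) i). simpl in H0. fold T in H0.
    pose proof (Hb _ A1 i). unfold al. lra.
  - intros k Hk. eapply Rle_trans; [|apply hhf_ge]. unfold h.
    eapply Rle_trans. apply (iter_mono T HTnn HTm n s _ Hsnn (Hlev _ Hk) i).
    apply nrm_ge_nonneg; auto.
Qed.
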